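(* Let $G$ be a word hyperbolic group and $0\to\mathbb Z\xrightarrow{\iota}E\xrightarrow{\pi}G\to1$ a central extension, $X$ a finite set mapping onto a symmetric generating set of $E$ (evaluation $w\mapsto\overline w\in E$). Let $C>0$ be an integer such that for every $g\in G$ the maximum $\max\{\overline w\,\iota(-C\,\mathrm{len}(w)): w\in X^*,\ \pi(\overline w)=g\}$ exists in the ordered fibre $\pi^{-1}(g)$, and such that for some $\lambda>0$ every word achieving this maximum is a $(\lambda,0)$-quasigeodesic in the Cayley graph of $G$ with respect to $\pi(\overline X)$; let $\rho(g)$ denote this maximum. Then for every constant $k$ there is a constant $K(k)$ such that whenever $g,h\in G$ and $g$ lies within distance $k$ of a geodesic path in the Cayley graph of $G$ from $1$ to $gh$, we have $d_E(\rho(gh),\rho(g)\rho(h))\le K(k)$.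
   Context: Order on a fibre: $h_1\le h_2$ iff $h_2h_1^{-1}=\iota(n)$ with $n\ge0$. $d_E$ is the word metric on $E$ with respect to the generating set $\overline X$. *)

(* Defs.v *)
From Stdlib Require Import ZArith Reals List Lia Lra FinFun.
Import ListNotations.

Record Group := {
  gcar :> Type;
  gmul : gcar -> gcar -> gcar;
  ginv : gcar -> gcar;
  gone : gcar;
  gassoc : forall a b c, gmul a (gmul b c) = gmul (gmul a b) c;
  gone_l : forall a, gmul gone a = a;
  ginv_l : forall a, gmul (ginv a) a = gone
}.

Arguments gmul {g}.
Arguments ginv {g}.
Arguments gone {g}.

Definition word_eval {H : Group} {Y : Type} (s : Y -> H) (w : list Y) : H :=
  fold_right (fun y acc => gmul (s y) acc) gone w.

Definition fin_sym_gen {H : Group} {Y : Type} (s : Y -> H) : Prop :=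
  Finite Y /\
  (forall y, exists y', s y' = ginv (s y)) /\
  (forall a : H, exists w : list Y, word_eval s w = a).

Definition dist_le {H : Group} {Y : Type} (s : Y -> H) (a b : H) (n : nat) : Prop :=
  exists w : list Y, length w <= n /\ gmul a (word_eval s w) = b.

Definition is_dist {H : Group} {Y : Type} (s : Y -> H) (a b : H) (n : nat) : Prop :=
  dist_le s a b n /\ forall m, dist_le s a b m -> n <= m.

Definition vertex {H : Group} {Y : Type} (s : Y -> H) (a : H) (w : list Y) (i : nat) : H :=
  gmul a (word_eval s (firstn i w)).

Definition geodesic_word {H : Group} {Y : Type} (s : Y -> H) (a b : H) (w : list Y) : Prop :=
  gmul a (word_eval s w) = b /\ is_dist s a b (length w).

Definition near_path {H : Group} {Y : Type} (s : Y -> H) (k : nat) (x a : H) (w : list Y) : Prop :=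
  exists i, i <= length w /\ dist_le s x (vertex s a w i) k.

Definition delta_hyperbolic {H : Group} {Y : Type} (s : Y -> H) (delta : nat) : Prop :=
  forall (a b c : H) (p q r : list Y),
    geodesic_word s a b p -> geodesic_word s b c q -> geodesic_word s c a r ->
    forall i, i <= length p ->
      near_path s delta (vertex s a p i) b q \/ near_path s delta (vertex s a p i) c r.

Definition word_hyperbolic (H : Group) : Prop :=
  exists (Y : Type) (s : Y -> H) (delta : nat), fin_sym_gen s /\ delta_hyperbolic s delta.

Definition is_group_hom {A B : Group} (f : A -> B) : Prop :=
  forall a b, f (gmul a b) = gmul (f a) (f b).

Definition central_extension (E G : Group) (iota : Z -> E) (pi : E -> G) : Prop :=
  (forall m n : Z, iota (m + n)%Z = gmul (iota m) (iota n)) /\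
  (forall m n : Z, iota m = iota n -> m = n) /\
  is_group_hom pi /\
  (forall g : G, exists e, pi e = g) /\
  (forall e : E, pi e = gone <-> exists n, e = iota n) /\
  (forall (n : Z) (e : E), gmul (iota n) e = gmul e (iota n)).

Definition fib_le {E : Group} (iota : Z -> E) (h1 h2 : E) : Prop :=
  exists n : Z, (0 <= n)%Z /\ gmul h2 (ginv h1) = iota n.

Definition wval {E : Group} {X : Type} (ev : X -> E) (iota : Z -> E) (C : Z) (w : list X) : E :=
  gmul (word_eval ev w) (iota (- C * Z.of_nat (length w))%Z).

Definition is_fib_max {E G : Group} {X : Type} (ev : X -> E) (iota : Z -> E) (pi : E -> G)
    (C : Z) (g : G) (m : E) : Prop :=
  (exists w, pi (word_eval ev w) = g /\ wval ev iota C w = m) /\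
  (forall w, pi (word_eval ev w) = g -> fib_le iota (wval ev iota C w) m).

Definition quasigeodesic {H : Group} {Y : Type} (s : Y -> H) (lam : R) (w : list Y) : Prop :=
  forall i j d, i <= length w -> j <= length w ->
    is_dist s (vertex s gone w i) (vertex s gone w j) d ->
    (INR (Nat.max i j - Nat.min i j) <= lam * INR d)%R /\
    (INR d <= lam * INR (Nat.max i j - Nat.min i j))%R.

(* Main.v *)
Require Import Defs.
From Stdlib Require Import ZArith Reals List Arith Lia Lra Wf_nat ClassicalEpsilon Classical FinFun.
Import ListNotations.

Module PA.

Section GroupLemmas.
Variable H : Group.

Lemma mul_inv_r (a : H) : gmul a (ginv a) = gone.
Proof.
  transitivity (gmul (ginv (ginv a)) (gmul (ginv a) (gmul a (ginv a)))).
  - rewrite gassoc, ginv_l, gone_l. reflexivity.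
  - rewrite (gassoc H (ginv a) a), ginv_l, gone_l, ginv_l. reflexivity.
Qed.

Lemma mul_one_r (a : H) : gmul a gone = a.
Proof. rewrite <- (ginv_l H a). rewrite gassoc. rewrite mul_inv_r. apply gone_l. Qed.

Lemma mul_cancel_l (a b c : H) : gmul a b = gmul a c -> b = c.
Proof.
  intro E. rewrite <- (gone_l H b), <- (gone_l H c), <- (ginv_l H a), <- !gassoc, E. reflexivity.
Qed.

Lemma mul_cancel_r (a b c : H) : gmul b a = gmul c a -> b = c.
Proof.
  intro E. rewrite <- (mul_one_r b), <- (mul_one_r c), <- (mul_inv_r a), !gassoc, E. reflexivity.
Qed.

Lemma inv_unique (a b : H) : gmul a b = gone -> b = ginv a.
Proof. intro E. apply (mul_cancel_l a). rewrite E, mul_inv_r. reflexivity. Qed.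

Lemma inv_mul (a b : H) : ginv (gmul a b) = gmul (ginv b) (ginv a).
Proof.
  symmetry. apply inv_unique. rewrite <- gassoc, (gassoc H b), mul_inv_r, gone_l, mul_inv_r. reflexivity.
Qed.

Lemma inv_inv (a : H) : ginv (ginv a) = a.
Proof. symmetry. apply inv_unique. apply ginv_l. Qed.

Lemma inv_one : ginv (gone : H) = gone.
Proof. symmetry. apply inv_unique. apply gone_l. Qed.

Lemma solve_l (a b c : H) : gmul a b = c -> b = gmul (ginv a) c.
Proof. intro E. rewrite <- E, gassoc, ginv_l, gone_l. reflexivity. Qed.

Lemma solve_r (a b c : H) : gmul a b = c -> a = gmul c (ginv b).
Proof. intro E. rewrite <- E, <- gassoc, mul_inv_r, mul_one_r. reflexivity. Qed.

End GroupLemmas.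

Lemma word_eval_app {H : Group} {Y : Type} (s : Y -> H) (u v : list Y) :
  word_eval s (u ++ v) = gmul (word_eval s u) (word_eval s v).
Proof.
  induction u as [|y u IH]; simpl. now rewrite gone_l.
  rewrite IH. apply gassoc.
Qed.

Definition ad (i j : nat) : nat := (i - j) + (j - i).

Set Default Proof Using "All".
Section Metric.
Context {H : Group} {Y : Type} (s : Y -> H).
Hypothesis Hsym : forall y, exists y', s y' = ginv (s y).
Hypothesis Hgen : forall a : H, exists w : list Y, word_eval s w = a.

Lemma inv_word (w : list Y) : exists w', length w' = length w /\ word_eval s w' = ginv (word_eval s w).
Proof.
  induction w as [|y w IH]; simpl.
  - exists nil. simpl. split; auto. now rewrite inv_one.
  - destruct IH as [w' [L E]]. destruct (Hsym y) as [y' Ey].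
    exists (w' ++ [y']). rewrite length_app, word_eval_app. simpl. split. lia.
    rewrite mul_one_r, E, Ey, inv_mul. reflexivity.
Qed.

Lemma dist_le_sym a b n : dist_le s a b n -> dist_le s b a n.
Proof.
  intros [w [L E]]. destruct (inv_word w) as [w' [L' E']].
  exists w'. split. lia. rewrite E'. rewrite <- E, <- gassoc, mul_inv_r, mul_one_r. reflexivity.
Qed.

Lemma dist_le_trans a b c n m : dist_le s a b n -> dist_le s b c m -> dist_le s a c (n + m).
Proof.
  intros [w [L E]] [w2 [L2 E2]]. exists (w ++ w2). rewrite length_app, word_eval_app.
  split. lia. rewrite gassoc, E, E2. reflexivity.
Qed.

Lemma dist_le_mono a b n m : n <= m -> dist_le s a b n -> dist_le s a b m.
Proof. intros le [w [L E]]. exists w. split. lia. exact E. Qed.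

Lemma dist_le_transl x a b n : dist_le s a b n -> dist_le s (gmul x a) (gmul x b) n.
Proof. intros [w [L E]]. exists w. split; auto. rewrite <- gassoc, E. reflexivity. Qed.

Lemma dist_le_transl_inv x a b n : dist_le s (gmul x a) (gmul x b) n -> dist_le s a b n.
Proof. intros [w [L E]]. exists w. split; auto. rewrite <- gassoc in E. eapply mul_cancel_l; eauto. Qed.

Lemma dist_exists a b : exists n, dist_le s a b n.
Proof.
  destruct (Hgen (gmul (ginv a) b)) as [w E]. exists (length w), w. split; auto.
  rewrite E, gassoc, mul_inv_r, gone_l. reflexivity.
Qed.

Lemma is_dist_exists a b : exists n, is_dist s a b n.
Proof.
  destruct (dec_inh_nat_subset_has_unique_least_element (dist_le s a b)) as [n [[P1 P2] _]].
  - intro n. apply classic.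
  - apply dist_exists.
  - exists n. split; auto.
Qed.

Definition dd (a b : H) : nat := epsilon (inhabits 0) (is_dist s a b).

Lemma dd_spec a b : is_dist s a b (dd a b).
Proof. unfold dd. apply epsilon_spec. apply is_dist_exists. Qed.

Lemma dd_le a b n : dist_le s a b n <-> dd a b <= n.
Proof.
  destruct (dd_spec a b) as [P1 P2]. split.
  - apply P2.
  - intro le. eapply dist_le_mono; eauto.
Qed.

Lemma is_dist_dd a b n : is_dist s a b n -> n = dd a b.
Proof.
  intros [P1 P2]. destruct (dd_spec a b) as [Q1 Q2]. specialize (P2 _ Q1). specialize (Q2 _ P1). lia.
Qed.

Lemma dd_sym a b : dd a b = dd b a.
Proof.
  apply Nat.le_antisymm; apply dd_le; apply dist_le_sym; apply dd_le; lia.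
Qed.

Lemma dd_tri a b c : dd a c <= dd a b + dd b c.
Proof. apply dd_le. apply dist_le_trans with b; apply dd_le; lia. Qed.

Lemma dd_refl a : dd a a = 0.
Proof. assert (dd a a <= 0). apply dd_le. exists nil. split; simpl; auto. apply mul_one_r. lia. Qed.

Lemma dd_zero a b : dd a b = 0 -> a = b.
Proof.
  intro E. assert (dist_le s a b 0) as [w [L E2]] by (apply dd_le; lia).
  destruct w; simpl in *; [|lia]. rewrite <- E2. symmetry. apply mul_one_r.
Qed.

Lemma dd_transl x a b : dd (gmul x a) (gmul x b) = dd a b.
Proof.
  apply Nat.le_antisymm; apply dd_le.
  - apply dist_le_transl. apply dd_le. lia.
  - apply dist_le_transl_inv with x. apply dd_le. lia.
Qed.

Lemma dd_word a w : dd a (gmul a (word_eval s w)) <= length w.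
Proof. apply dd_le. exists w. split; auto. Qed.

Lemma dd_geod_word a b : exists w, length w = dd a b /\ gmul a (word_eval s w) = b.
Proof.
  destruct (dd_spec a b) as [[w [L E]] P]. specialize (P (length w)).
  assert (dd a b <= length w) by (apply P; exists w; auto). exists w. split; auto. lia.
Qed.

End Metric.

End PA.
Import PA.
Module PB.

Lemma firstn_split {A : Type} (w : list A) i j : i <= j ->
  exists v, length v <= j - i /\ firstn j w = firstn i w ++ v.
Proof.
  revert i j; induction w as [|x w IH]; intros i j le.
  - exists nil. rewrite !firstn_nil. simpl. split; [lia|reflexivity].
  - destruct i as [|i].
    + exists (firstn j (x :: w)). simpl. split; [rewrite length_firstn; simpl; lia | reflexivity].
    + destruct j as [|j]; [lia|]. destruct (IH i j) as [v [L E]]; [lia|].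
      exists v. simpl. rewrite E. split; [lia|reflexivity].
Qed.

Set Default Proof Using "All".
Section Chains.
Context {H : Group} {Y : Type} (s : Y -> H).
Hypothesis Hsym : forall y, exists y', s y' = ginv (s y).
Hypothesis Hgen : forall a : H, exists w : list Y, word_eval s w = a.

Notation d := (dd s).
Let dd_refl := dd_refl s Hsym Hgen.
Let dd_sym := dd_sym s Hsym Hgen.
Let dd_tri := dd_tri s Hsym Hgen.
Let dd_le := dd_le s Hsym Hgen.
Let dd_transl := dd_transl s Hsym Hgen.
Let dd_zero := dd_zero s Hsym Hgen.
Let dd_word := dd_word s Hsym Hgen.
Let is_dist_dd := is_dist_dd s Hsym Hgen.

Lemma vertex_dd a w i j : i <= j -> d (vertex s a w i) (vertex s a w j) <= j - i.
Proof.
  intro le. destruct (firstn_split w i j le) as [v [L E]]. unfold vertex. rewrite E, word_eval_app, gassoc.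
  eapply Nat.le_trans. apply dd_word. lia.
Qed.

Lemma vertex_0 a w : vertex s a w 0 = a.
Proof. unfold vertex. simpl. apply mul_one_r. Qed.

Lemma vertex_len a w : vertex s a w (length w) = gmul a (word_eval s w).
Proof. unfold vertex. rewrite firstn_all. reflexivity. Qed.

Definition Lchain (L : nat) (c : nat -> H) (n : nat) := forall i, i < n -> d (c i) (c (S i)) <= L.
Definition geodc (c : nat -> H) (n : nat) := forall i j, i <= n -> j <= n -> d (c i) (c j) = ad i j.
Definition near (x : H) (c : nat -> H) (n R : nat) := exists j, j <= n /\ d x (c j) <= R.

Lemma Lchain_dist L c n i j : Lchain L c n -> i <= j -> j <= n -> d (c i) (c j) <= L * (j - i).
Proof.
  intros HL le1 le2. induction j as [|j IH].
  - assert (i = 0) by lia. subst. rewrite dd_refl. lia.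
  - destruct (Nat.eq_dec i (S j)). subst. rewrite dd_refl. lia.
    specialize (IH ltac:(lia) ltac:(lia)). specialize (HL j ltac:(lia)).
    pose proof (dd_tri (c i) (c j) (c (S j))). nia.
Qed.

Lemma geodc_Lchain L c n : 1 <= L -> geodc c n -> Lchain L c n.
Proof. intros HL G i lt. rewrite G by lia. unfold ad. lia. Qed.

Lemma vertex_Lchain a w : Lchain 1 (vertex s a w) (length w).
Proof. intros i lt. pose proof (vertex_dd a w i (S i)). lia. Qed.

Lemma geod_word_chain a b p : geodesic_word s a b p -> geodc (vertex s a p) (length p).
Proof.
  intros [E Dp]. apply is_dist_dd in Dp; auto.
  assert (forall i j, i <= j -> j <= length p -> d (vertex s a p i) (vertex s a p j) = j - i).
  { intros i j le1 le2. apply Nat.le_antisymm. apply vertex_dd; auto.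
    pose proof (dd_tri a (vertex s a p i) b). pose proof (dd_tri (vertex s a p i) (vertex s a p j) b).
    pose proof (vertex_dd a p 0 i ltac:(lia)). pose proof (vertex_dd a p j (length p) le2).
    rewrite vertex_0 in *. rewrite vertex_len, E in *. lia. }
  intros i j le1 le2. unfold ad. destruct (Nat.le_ge_cases i j).
  rewrite H0 by lia; lia. rewrite dd_sym by auto. rewrite H0 by lia; lia.
Qed.

Lemma vertex_snoc a p y i : i <= length p -> vertex s a (p ++ [y]) i = vertex s a p i.
Proof.
  intro le. unfold vertex. rewrite firstn_app. replace (i - length p) with 0 by lia. simpl.
  rewrite app_nil_r. reflexivity.
Qed.

Lemma chain_word c n : (forall i, i < n -> exists y, gmul (c i) (s y) = c (S i)) ->
  exists p, length p = n /\ forall i, i <= n -> vertex s (c 0) p i = c i.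
Proof.
  induction n as [|n IH]; intro Hst.
  - exists nil. split; auto. intros i le. assert (i = 0) by lia. subst. apply vertex_0.
  - destruct IH as [p [L E]]. intros; apply Hst; lia.
    destruct (Hst n ltac:(lia)) as [y Ey].
    exists (p ++ [y]). rewrite length_app. simpl. split. lia.
    intros i le. destruct (Nat.eq_dec i (S n)).
    + assert (vertex s (c 0) (p++[y]) (length (p++[y])) = c (S n)) as HH.
      { rewrite vertex_len, word_eval_app, gassoc. rewrite <- (vertex_len (c 0) p), L, E by lia.
        simpl. rewrite mul_one_r. exact Ey. }
      rewrite length_app in HH; simpl in HH. rewrite e. replace (S n) with (length p + 1) by lia.
      rewrite HH. f_equal. lia.
    + rewrite vertex_snoc by lia. apply E. lia.
Qed.

Lemma geodc_word c n : geodc c n ->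
  exists p, geodesic_word s (c 0) (c n) p /\ length p = n /\ forall i, i <= n -> vertex s (c 0) p i = c i.
Proof.
  intro G. destruct (chain_word c n) as [p [L E]].
  - intros i lt. assert (dist_le s (c i) (c (S i)) 1) as [w [Lw Ew]].
    { apply dd_le; auto. rewrite G by lia. unfold ad. lia. }
    destruct w as [|y [|]]; simpl in *; try lia.
    + rewrite mul_one_r in Ew. specialize (G i (S i) ltac:(lia) ltac:(lia)). rewrite Ew, dd_refl in G.
      unfold ad in G. lia.
    + exists y. rewrite mul_one_r in Ew. exact Ew.
  - exists p. split; [|split; auto].
    assert (gmul (c 0) (word_eval s p) = c n) as Ep by (rewrite <- vertex_len, L; apply E; lia).
    split; [exact Ep|]. split. exists p; split; [lia|exact Ep].
    intros m Hm. apply dd_le in Hm; auto. rewrite G in Hm by lia. unfold ad in Hm. lia.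
Qed.

Lemma hyp_chain delta : delta_hyperbolic s delta ->
  forall p n1 q n2 r n3, geodc p n1 -> geodc q n2 -> geodc r n3 ->
  p n1 = q 0 -> q n2 = r 0 -> r n3 = p 0 ->
  forall i, i <= n1 -> near (p i) q n2 delta \/ near (p i) r n3 delta.
Proof.
  intros Hd p n1 q n2 r n3 Gp Gq Gr E1 E2 E3 i le.
  destruct (geodc_word p n1 Gp) as [wp [Wp [Lp Vp]]].
  destruct (geodc_word q n2 Gq) as [wq [Wq [Lq Vq]]].
  destruct (geodc_word r n3 Gr) as [wr [Wr [Lr Vr]]].
  rewrite E1 in Wp. rewrite E2 in Wq. rewrite E3 in Wr.
  destruct (Hd _ _ _ _ _ _ Wp Wq Wr i ltac:(lia)) as [[j [lj Dj]]|[j [lj Dj]]].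
  - left. exists j. split. lia. rewrite Vp in Dj by lia. rewrite Vq in Dj by lia.
    apply dd_le; auto.
  - right. exists j. split. lia. rewrite Vp in Dj by lia. rewrite Vr in Dj by lia.
    apply dd_le; auto.
Qed.

Lemma geodc_exists a b : exists c, geodc c (d a b) /\ c 0 = a /\ c (d a b) = b.
Proof.
  destruct (dd_geod_word s Hsym Hgen a b) as [w [L E]].
  exists (vertex s a w). rewrite <- L. split; [|split].
  - apply geod_word_chain with b. split; auto. rewrite L.
    split. apply dd_le; auto. intros m Hm. apply dd_le in Hm; auto.
  - apply vertex_0.
  - rewrite vertex_len. exact E.
Qed.

Lemma geodc_rev c n : geodc c n -> geodc (fun i => c (n - i)) n.
Proof. intros G i j li lj. rewrite G by lia. unfold ad. lia. Qed.

Lemma geodc_sub c n k m : geodc c n -> k + m <= n -> geodc (fun i => c (k + i)) m.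
Proof. intros G le i j li lj. rewrite G by lia. unfold ad. lia. Qed.

Lemma geodc_len c n : geodc c n -> d (c 0) (c n) = n.
Proof. intro G. rewrite G by lia. unfold ad. lia. Qed.

End Chains.

End PB.
Import PB.
Module PC.

Set Default Proof Using "All".
Section Thin.
Context {H : Group} {Y : Type} (s : Y -> H).
Hypothesis Hsym : forall y, exists y', s y' = ginv (s y).
Hypothesis Hgen : forall a : H, exists w : list Y, word_eval s w = a.
Variable delta : nat.
Hypothesis Hd : delta_hyperbolic s delta.

Notation d := (dd s).
Notation near := (near s).
Notation geodc := (geodc s).
Notation Lchain := (Lchain s).
Let dd_refl := dd_refl s Hsym Hgen.
Let dd_sym := dd_sym s Hsym Hgen.
Let dd_tri := dd_tri s Hsym Hgen.

Lemma near_sub c n u v x R : near x (fun t => c (u + t)) (v - u) R -> u <= v -> v <= n -> near x c n R.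
Proof. intros [j [lj Dj]] le0 le. exists (u + j). split. lia. exact Dj. Qed.

Lemma near_trans x q nq c n R1 R2 : near x q nq R1 -> (forall j, j <= nq -> near (q j) c n R2) ->
  near x c n (R1 + R2).
Proof.
  intros [j [lj Dj]] F. destruct (F j lj) as [j' [lj' Dj']]. exists j'. split; auto.
  pose proof (dd_tri x (q j) (c j')). lia.
Qed.

Lemma near_mono x c n R R' : R <= R' -> near x c n R -> near x c n R'.
Proof. intros le [j [lj Dj]]. exists j. split; auto. lia. Qed.

Lemma Lchain_sub L c n u v : Lchain L c n -> v <= n -> Lchain L (fun t => c (u + t)) (v - u).
Proof. intros HL le i lt. replace (u + S i) with (S (u + i)) by lia. apply HL. lia. Qed.

Lemma thin_log : forall k L c n, Lchain L c n -> n <= 2 ^ k ->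
  forall g m, geodc g m -> ((g 0 = c 0 /\ g m = c n) \/ (g 0 = c n /\ g m = c 0)) ->
  forall i, i <= m -> near (g i) c n (delta * k + L).
Proof.
  assert (base : forall L c n, Lchain L c n -> n <= 1 ->
    forall g m, geodc g m -> ((g 0 = c 0 /\ g m = c n) \/ (g 0 = c n /\ g m = c 0)) ->
    forall i, i <= m -> near (g i) c n L).
  { intros L c n HL n1 g m G E i le.
    assert (Hm : m = d (g 0) (g m)) by (rewrite G by lia; unfold ad; lia).
    assert (d (c 0) (c n) <= L * (n - 0)) by (apply (Lchain_dist s Hsym Hgen L c n 0 n); auto; lia).
    assert (Hi : d (g i) (g 0) = i) by (rewrite G by lia; unfold ad; lia).
    destruct E as [[E1 E2]|[E1 E2]].
    - exists 0. split. lia. rewrite <- E1. rewrite E1, E2 in Hm. nia.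
    - exists n. split. lia. rewrite <- E1. rewrite E1, E2, dd_sym in Hm. nia. }
  induction k as [|k IH]; intros L c n HL Hn g m G E i le.
  - simpl in Hn. eapply near_mono; [|eapply base; eauto]. lia.
  - destruct (Nat.le_gt_cases n 1) as [n1|n2].
    { eapply near_mono; [|eapply base; eauto]. lia. }
    assert (Hk : 2 ^ S k = 2 * 2 ^ k) by reflexivity.
    set (h := n / 2).
    assert (Hh : h <= 2 ^ k /\ n - h <= 2 ^ k /\ h <= n).
    { pose proof (Nat.div_mod n 2 ltac:(lia)). pose proof (Nat.mod_upper_bound n 2 ltac:(lia)).
      unfold h. lia. }
    assert (help : forall u v, u <= v -> v <= n -> v - u <= 2 ^ k ->
      forall b mb, geodc b mb -> ((b 0 = c u /\ b mb = c v) \/ (b 0 = c v /\ b mb = c u)) ->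
      forall t, t <= mb -> near (b t) c n (delta * k + L)).
    { intros u v uv vn vu b mb Gb Eb t lt.
      apply near_sub with u v; auto.
      apply (IH L (fun t => c (u + t)) (v - u) (Lchain_sub L c n u v HL vn) vu b mb Gb); auto.
      replace (u + (v - u)) with v by lia. replace (u + 0) with u by lia. exact Eb. }
    destruct E as [[E1 E2]|[E1 E2]].
    + destruct (geodc_exists s Hsym Hgen (c n) (c h)) as [b [Gb [Eb1 Eb2]]].
      destruct (geodc_exists s Hsym Hgen (c h) (c 0)) as [a [Ga [Ea1 Ea2]]].
      destruct (hyp_chain s Hsym Hgen delta Hd g m b _ a _ G Gb Ga ltac:(congruence)
        ltac:(congruence) ltac:(congruence) i le) as [N|N].
      * replace (delta * S k + L) with (delta + (delta * k + L)) by lia.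
        eapply near_trans; eauto. intros j lj. apply (help h n ltac:(lia) ltac:(lia) ltac:(lia) b _ Gb); [|lia]. first [left; split; congruence | right; split; congruence].
      * replace (delta * S k + L) with (delta + (delta * k + L)) by lia.
        eapply near_trans; eauto. intros j lj. apply (help 0 h ltac:(lia) ltac:(lia) ltac:(lia) a _ Ga); [|lia]. first [left; split; congruence | right; split; congruence].
    + destruct (geodc_exists s Hsym Hgen (c 0) (c h)) as [b [Gb [Eb1 Eb2]]].
      destruct (geodc_exists s Hsym Hgen (c h) (c n)) as [a [Ga [Ea1 Ea2]]].
      destruct (hyp_chain s Hsym Hgen delta Hd g m b _ a _ G Gb Ga ltac:(congruence)
        ltac:(congruence) ltac:(congruence) i le) as [N|N].
      * replace (delta * S k + L) with (delta + (delta * k + L)) by lia.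
        eapply near_trans; eauto. intros j lj. apply (help 0 h ltac:(lia) ltac:(lia) ltac:(lia) b _ Gb); [|lia]. first [left; split; congruence | right; split; congruence].
      * replace (delta * S k + L) with (delta + (delta * k + L)) by lia.
        eapply near_trans; eauto. intros j lj. apply (help h n ltac:(lia) ltac:(lia) ltac:(lia) a _ Ga); [|lia]. first [left; split; congruence | right; split; congruence].
Qed.

End Thin.

End PC.
Import PC.
Module PD.

Lemma pow_ge_succ t : t + 1 <= 2 ^ t.
Proof. induction t; simpl; lia. Qed.

Lemma exp_beats_lin a b : exists T, forall t, T <= t -> a * t + b <= 2 ^ t.
Proof.
  set (m := 2 * a + b + 1). exists (2 * m).
  assert (base : a * (2 * m) + b <= 2 ^ (2 * m)).
  { replace (2 ^ (2 * m)) with (2 ^ m * 2 ^ m) by (rewrite <- Nat.pow_add_r; f_equal; lia).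
    pose proof (pow_ge_succ m). unfold m in *. nia. }
  intros t le. induction le as [|t le IH]. exact base.
  pose proof (pow_ge_succ t). simpl. unfold m in *. lia.
Qed.

Lemma num_lemma a delta L : exists D0, forall D, D0 < D -> exists k, a * D <= 2 ^ k /\ delta * k + L < D.
Proof.
  destruct (exp_beats_lin (a * delta) (a * delta + a * L)) as [T HT].
  exists (delta * T + L). intros D HD.
  destruct (Nat.le_gt_cases (a * D) 1) as [le1|gt1].
  - exists 0. simpl. lia.
  - exists (Nat.log2_up (a * D)). destruct (Nat.log2_up_spec (a * D) gt1) as [S1 S2].
    split; auto. set (k := Nat.log2_up (a * D)) in *.
    destruct (Nat.le_gt_cases k T). nia.
    specialize (HT (Nat.pred k) ltac:(lia)).
    assert (a * (delta * k + L) < a * D).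
    { replace k with (S (Nat.pred k)) at 1 by lia. nia. }
    nia.
Qed.

End PD.
Import PD.
Module PE.

Set Default Proof Using "All".
Section Morse.
Context {H : Group} {Y : Type} (s : Y -> H).
Hypothesis Hsym : forall y, exists y', s y' = ginv (s y).
Hypothesis Hgen : forall a : H, exists w : list Y, word_eval s w = a.
Variable delta : nat.
Hypothesis Hd : delta_hyperbolic s delta.

Notation d := (dd s).
Notation near := (near s).
Notation geodc := (geodc s).
Notation Lchain := (Lchain s).
Let dd_refl := dd_refl s Hsym Hgen.
Let dd_sym := dd_sym s Hsym Hgen.
Let dd_tri := dd_tri s Hsym Hgen.

Fixpoint dmin (x : H) (c : nat -> H) (N : nat) : nat :=
  match N with 0 => d x (c 0) | S N' => Nat.min (dmin x c N') (d x (c (S N'))) end.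

Lemma dmin_le x c N j : j <= N -> dmin x c N <= d x (c j).
Proof.
  induction N as [|N IH]; intro le; simpl.
  - assert (j = 0) by lia. subst. lia.
  - destruct (Nat.eq_dec j (S N)). subst. lia. specialize (IH ltac:(lia)). lia.
Qed.

Lemma dmin_att x c N : exists j, j <= N /\ d x (c j) = dmin x c N.
Proof.
  induction N as [|N IH]; simpl. exists 0. auto.
  destruct IH as [j [lj Ej]]. destruct (Nat.le_ge_cases (dmin x c N) (d x (c (S N)))).
  - exists j. split. lia. lia.
  - exists (S N). split. lia. lia.
Qed.

Fixpoint fmax (f : nat -> nat) (n : nat) : nat :=
  match n with 0 => f 0 | S n' => Nat.max (fmax f n') (f (S n')) end.

Lemma fmax_ge f n i : i <= n -> f i <= fmax f n.
Proof.
  induction n as [|n IH]; intro le; simpl.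
  - assert (i = 0) by lia. subst. lia.
  - destruct (Nat.eq_dec i (S n)). subst. lia. specialize (IH ltac:(lia)). lia.
Qed.

Lemma fmax_att f n : exists i, i <= n /\ f i = fmax f n.
Proof.
  induction n as [|n IH]; simpl. exists 0. auto.
  destruct IH as [j [lj Ej]]. destruct (Nat.le_ge_cases (fmax f n) (f (S n))).
  - exists (S n). split. lia. lia.
  - exists j. split. lia. lia.
Qed.

Definition cat (c1 : nat -> H) (n1 : nat) (c2 : nat -> H) : nat -> H :=
  fun i => if i <=? n1 then c1 i else c2 (i - n1).

Lemma cat_Lchain L c1 n1 c2 n2 : Lchain L c1 n1 -> Lchain L c2 n2 -> c1 n1 = c2 0 ->
  Lchain L (cat c1 n1 c2) (n1 + n2).
Proof.
  intros H1 H2 E i lt. unfold cat.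
  destruct (Nat.leb_spec i n1); destruct (Nat.leb_spec (S i) n1).
  - apply H1. lia.
  - assert (i = n1) by lia. subst. replace (S n1 - n1) with (S 0) by lia. rewrite E. apply H2. lia.
  - lia.
  - replace (S i - n1) with (S (i - n1)) by lia. apply H2. lia.
Qed.

Lemma cat_0 c1 n1 c2 : cat c1 n1 c2 0 = c1 0.
Proof. reflexivity. Qed.

Lemma cat_end c1 n1 c2 n2 : c1 n1 = c2 0 -> cat c1 n1 c2 (n1 + n2) = c2 n2.
Proof.
  intro E. unfold cat. destruct (Nat.leb_spec (n1 + n2) n1).
  - assert (n2 = 0) by lia. subst. rewrite Nat.add_0_r. exact E.
  - f_equal. lia.
Qed.

Lemma cat_vertex c1 n1 c2 n2 j : j <= n1 + n2 ->
  (exists j', j' <= n1 /\ cat c1 n1 c2 j = c1 j') \/ (exists j', j' <= n2 /\ cat c1 n1 c2 j = c2 j').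
Proof.
  intro le. unfold cat. destruct (Nat.leb_spec j n1).
  - left. exists j. auto.
  - right. exists (j - n1). split. lia. reflexivity.
Qed.

Definition seg (c : nat -> H) (a b : nat) : nat -> H :=
  fun i => if a <=? b then c (a + i) else c (a - i).

Lemma seg_0 c a b : seg c a b 0 = c a.
Proof. unfold seg. destruct (a <=? b); f_equal; lia. Qed.

Lemma seg_end c a b : seg c a b (ad a b) = c b.
Proof. unfold seg, ad. destruct (Nat.leb_spec a b); f_equal; lia. Qed.

Lemma seg_Lchain L c N a b : Lchain L c N -> a <= N -> b <= N -> Lchain L (seg c a b) (ad a b).
Proof.
  intros HL la lb i lt. unfold seg, ad in *. destruct (Nat.leb_spec a b).
  - replace (a + S i) with (S (a + i)) by lia. apply HL. lia.
  - replace (a - i) with (S (a - S i)) by lia. rewrite dd_sym. apply HL. lia.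
Qed.

Lemma seg_vertex c a b j : j <= ad a b -> exists j', j' <= Nat.max a b /\ seg c a b j = c j'.
Proof.
  intro le. unfold seg, ad in *. destruct (Nat.leb_spec a b).
  - exists (a + j). split. lia. reflexivity.
  - exists (a - j). split. lia. reflexivity.
Qed.

Lemma morse1 L M : 1 <= L -> exists D1, forall c N g n, Lchain L c N ->
  (forall i j, i <= j -> j <= N -> j - i <= M * d (c i) (c j)) ->
  geodc g n -> g 0 = c 0 -> g n = c N -> forall i, i <= n -> near (g i) c N D1.
Proof.
  intro L1. destruct (num_lemma (6 * M + 2) delta L) as [D0 HD0]. exists D0.
  intros c N g n HL Hq G E0 En.
  set (f := fun i => dmin (g i) c N).
  set (D := fmax f n).
  assert (Hall : forall i, i <= n -> exists j, j <= N /\ d (g i) (c j) <= D).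
  { intros i li. destruct (dmin_att (g i) c N) as [j [lj Ej]]. exists j. split; auto.
    rewrite Ej. apply (fmax_ge f n i li). }
  assert (Hq' : forall i j, i <= N -> j <= N -> ad i j <= M * d (c i) (c j)).
  { intros i j li lj. unfold ad. destruct (Nat.le_ge_cases i j).
    - specialize (Hq i j H0 lj). lia.
    - specialize (Hq j i H0 li). rewrite dd_sym. lia. }
  assert (DD : D <= D0).
  { destruct (Nat.le_gt_cases D D0) as [|gt]; auto. exfalso.
    destruct (HD0 D gt) as [k [Hk1 Hk2]].
    destruct (fmax_att f n) as [i0 [li0 Ei0]]. fold D in Ei0.
    set (x0 := g i0).
    assert (Hfar : forall j, j <= N -> D <= d x0 (c j)).
    { intros j lj. rewrite <- Ei0. unfold f. apply dmin_le; auto. }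
    assert (Hy : exists iy sy, iy <= i0 /\ i0 - iy <= 2 * D /\ sy <= N /\ d (g iy) (c sy) <= D /\
                   (i0 - iy = 2 * D \/ g iy = c sy)).
    { destruct (Nat.le_gt_cases (2 * D) i0).
      - destruct (Hall (i0 - 2 * D) ltac:(lia)) as [j [lj Dj]].
        exists (i0 - 2 * D), j. repeat split; auto; lia.
      - exists 0, 0. rewrite E0, dd_refl. repeat split; auto; lia. }
    assert (Hz : exists iz tz, i0 <= iz /\ iz <= n /\ iz - i0 <= 2 * D /\ tz <= N /\ d (g iz) (c tz) <= D /\
                   (iz - i0 = 2 * D \/ g iz = c tz)).
    { destruct (Nat.le_gt_cases (i0 + 2 * D) n).
      - destruct (Hall (i0 + 2 * D) ltac:(lia)) as [j [lj Dj]].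
        exists (i0 + 2 * D), j. repeat split; auto; lia.
      - exists n, N. rewrite En, dd_refl. repeat split; auto; lia. }
    destruct Hy as [iy [sy [Y1 [Y2 [Y3 [Y4 Y5]]]]]].
    destruct Hz as [iz [tz [Z1 [Z2 [Z3 [Z4 [Z5 Z6]]]]]]].
    destruct (geodc_exists s Hsym Hgen (g iy) (c sy)) as [p1 [G1 [E11 E12]]].
    destruct (geodc_exists s Hsym Hgen (c tz) (g iz)) as [p3 [G3 [E31 E32]]].
    set (p2 := seg c sy tz). set (l2 := ad sy tz).
    set (P := cat p1 (d (g iy) (c sy)) (cat p2 l2 p3)).
    assert (HP : Lchain L P ((d (g iy) (c sy)) + (l2 + (d (c tz) (g iz))))).
    { apply cat_Lchain. apply geodc_Lchain; auto. apply cat_Lchain.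
      apply seg_Lchain with N; auto. apply geodc_Lchain; auto.
      unfold p2, l2. rewrite seg_end. auto. rewrite cat_0. unfold p2. rewrite seg_0. auto. }
    assert (Hl2 : l2 <= M * (6 * D)).
    { unfold l2. eapply Nat.le_trans. apply Hq'; auto.
      apply Nat.mul_le_mono_l.
      pose proof (dd_tri (c sy) (g iy) (c tz)). pose proof (dd_tri (g iy) (g iz) (c tz)).
      assert (d (g iy) (g iz) = iz - iy) by (rewrite G by lia; unfold ad; lia).
      pose proof (dd_sym (c sy) (g iy)). lia. }
    assert (Hl13 : (d (g iy) (c sy)) <= D /\ (d (c tz) (g iz)) <= D) by (pose proof (dd_sym (c tz) (g iz)); lia).
    assert (Hnear : near x0 P ((d (g iy) (c sy)) + (l2 + (d (c tz) (g iz)))) (delta * k + L)).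
    { unfold x0. replace i0 with (iy + (i0 - iy)) by lia.
      apply (thin_log s Hsym Hgen delta Hd k L P _ HP) with (g := fun t => g (iy + t)) (m := iz - iy).
      - eapply Nat.le_trans; [|exact Hk1]. nia.
      - apply geodc_sub with n; auto. lia.
      - left. split. unfold P. rewrite cat_0. rewrite Nat.add_0_r. auto.
        unfold P. rewrite cat_end. rewrite cat_end. replace (iy + (iz - iy)) with iz by lia. auto.
        unfold p2, l2. rewrite seg_end. auto.
        rewrite cat_0. unfold p2. rewrite seg_0. auto.
      - lia. }
    destruct Hnear as [j [lj Dj]].
    assert (D <= d x0 (P j)).
    { destruct (cat_vertex p1 (d (g iy) (c sy)) (cat p2 l2 p3) (l2 + (d (c tz) (g iz))) j lj) as [[j' [lj' Ej']]|[j' [lj' Ej']]];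
        unfold P; rewrite Ej'.
      - destruct Y5 as [Y5|Y5].
        + pose proof (dd_tri x0 (p1 j') (g iy)).
          assert (d x0 (g iy) = 2 * D) by (unfold x0; rewrite G by lia; unfold ad; lia).
          assert (d (p1 j') (g iy) = j') by (rewrite <- E11, G1 by lia; unfold ad; lia).
          lia.
        + assert ((d (g iy) (c sy)) = 0) by (rewrite Y5; apply dd_refl).
          assert (j' = 0) by lia. subst j'. rewrite E11, Y5. apply Hfar; auto.
      - destruct (cat_vertex p2 l2 p3 (d (c tz) (g iz)) j' lj') as [[j'' [lj'' Ej'']]|[j'' [lj'' Ej'']]];
          rewrite Ej''.
        + unfold p2 in *. destruct (seg_vertex c sy tz j'' lj'') as [j3 [lj3 Ej3]]. rewrite Ej3.
          apply Hfar. lia.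
        + destruct Z6 as [Z6|Z6].
          * pose proof (dd_tri x0 (p3 j'') (g iz)).
            assert (d x0 (g iz) = 2 * D) by (unfold x0; rewrite G by lia; unfold ad; lia).
            assert (d (p3 j'') (g iz) = (d (c tz) (g iz)) - j'') by (pose proof (G3 j'' (d (c tz) (g iz)) ltac:(lia) ltac:(lia)) as HH; rewrite E32 in HH; unfold ad in HH; lia).
            lia.
          * assert ((d (c tz) (g iz)) = 0) by (rewrite Z6; apply dd_refl).
            assert (j'' = 0) by lia. subst j''. rewrite E31. apply Hfar; auto. }
    lia. }
  intros i li. destruct (Hall i li) as [j [lj Dj]]. exists j. split; auto. lia.
Qed.

End Morse.

End PE.
Import PE.
Module PF.

Lemma discrete_ivt (P Q : nat -> Prop) n : P 0 -> Q n -> (forall i, i <= n -> P i \/ Q i) ->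
  exists i, i <= n /\ P i /\ (Q i \/ (i < n /\ Q (S i))).
Proof.
  intros P0 Qn PQ.
  assert (forall t, t <= n -> (exists i, i <= n /\ P i /\ (Q i \/ (i < n /\ Q (S i)))) \/ P t).
  { induction t as [|t IH]; intro le. right; auto.
    destruct (IH ltac:(lia)) as [|Pt]; auto.
    destruct (PQ (S t) le) as [|Qt]; auto.
    left. exists t. split. lia. split; auto. }
  destruct (H n (le_n n)) as [|Pn]; auto. exists n. auto.
Qed.

Set Default Proof Using "All".
Section Morse2.
Context {H : Group} {Y : Type} (s : Y -> H).
Hypothesis Hsym : forall y, exists y', s y' = ginv (s y).
Hypothesis Hgen : forall a : H, exists w : list Y, word_eval s w = a.
Variable delta : nat.
Hypothesis Hd : delta_hyperbolic s delta.

Notation d := (dd s).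
Notation near := (near s).
Notation geodc := (geodc s).
Notation Lchain := (Lchain s).
Let dd_refl := dd_refl s Hsym Hgen.
Let dd_sym := dd_sym s Hsym Hgen.
Let dd_tri := dd_tri s Hsym Hgen.

Lemma morse2 L M : 1 <= L -> exists D2, forall c N g n, Lchain L c N ->
  (forall i j, i <= j -> j <= N -> j - i <= M * d (c i) (c j)) ->
  geodc g n -> g 0 = c 0 -> g n = c N -> forall m, m <= N -> exists i, i <= n /\ d (c m) (g i) <= D2.
Proof.
  intro L1. destruct (morse1 s Hsym Hgen delta Hd L M L1) as [D1 HD1].
  exists (L * (M * (2 * D1 + 1)) + D1).
  intros c N g n HL Hq G E0 En m lm.
  destruct (discrete_ivt (fun i => exists j, j <= m /\ d (g i) (c j) <= D1)
                         (fun i => exists j, m <= j /\ j <= N /\ d (g i) (c j) <= D1) n)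
    as [i [li [[j1 [lj1 D1j]] Qi]]].
  - exists 0. split. lia. rewrite E0, dd_refl. lia.
  - exists N. split. auto. split. auto. rewrite En, dd_refl. lia.
  - intros i li. destruct (HD1 c N g n HL Hq G E0 En i li) as [j [lj Dj]].
    destruct (Nat.le_ge_cases j m); [left|right]; exists j; auto.
  - assert (exists i' j2, i' <= n /\ ad i i' <= 1 /\ m <= j2 /\ j2 <= N /\ d (g i') (c j2) <= D1)
      as [i' [j2 [li' [ii' [mj2 [lj2 Dj2]]]]]].
    { destruct Qi as [[j2 [? [? ?]]]|[lt [j2 [? [? ?]]]]].
      - exists i, j2. unfold ad. repeat split; auto; lia.
      - exists (S i), j2. unfold ad. repeat split; auto; lia. }
    assert (d (g i) (g i') <= 1) by (rewrite G by lia; auto).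
    assert (d (c j1) (c j2) <= 2 * D1 + 1).
    { pose proof (dd_tri (c j1) (g i) (c j2)). pose proof (dd_tri (g i) (g i') (c j2)).
      pose proof (dd_sym (c j1) (g i)). lia. }
    assert (j2 - j1 <= M * (2 * D1 + 1)).
    { eapply Nat.le_trans. apply Hq; lia. apply Nat.mul_le_mono_l. auto. }
    assert (d (c j1) (c m) <= L * (m - j1)) by (apply (Lchain_dist s Hsym Hgen L c N); auto; lia).
    exists i. split; auto.
    pose proof (dd_tri (c m) (c j1) (g i)). pose proof (dd_sym (c m) (c j1)).
    pose proof (dd_sym (c j1) (g i)).
    assert (L * (m - j1) <= L * (M * (2 * D1 + 1))) by (apply Nat.mul_le_mono_l; lia).
    lia.
Qed.

End Morse2.

End PF.
Import PF.
Module PG.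

Lemma fold_max_ge {T : Type} (f : T -> nat) (l : list T) y : In y l ->
  f y <= fold_right (fun y acc => Nat.max (f y) acc) 0 l.
Proof. induction l as [|z l IH]; simpl; [tauto|]. intros [E|I]. subst; lia. specialize (IH I); lia. Qed.

Lemma compare_gen {H : Group} {Y1 Y2 : Type} (s1 : Y1 -> H) (s2 : Y2 -> H) :
  (forall y, exists y', s1 y' = ginv (s1 y)) -> (forall a : H, exists w, word_eval s1 w = a) ->
  (forall y, exists y', s2 y' = ginv (s2 y)) -> (forall a : H, exists w, word_eval s2 w = a) ->
  Finite Y1 -> exists L, 1 <= L /\ forall a b, dd s2 a b <= L * dd s1 a b.
Proof.
  intros sym1 gen1 sym2 gen2 [l Fl].
  set (L := 1 + fold_right (fun y acc => Nat.max (dd s2 gone (s1 y)) acc) 0 l).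
  assert (HL : forall y, dd s2 gone (s1 y) <= L).
  { intro y. pose proof (fold_max_ge (fun y => dd s2 gone (s1 y)) l y (Fl y)). unfold L. simpl in *. lia. }
  exists L. split. unfold L; lia.
  assert (W : forall w a, dd s2 a (gmul a (word_eval s1 w)) <= L * length w).
  { induction w as [|y w IH]; intro a; simpl.
    - rewrite mul_one_r, (dd_refl s2 sym2 gen2). lia.
    - rewrite gassoc. pose proof (IH (gmul a (s1 y))).
      pose proof (dd_tri s2 sym2 gen2 a (gmul a (s1 y)) (gmul (gmul a (s1 y)) (word_eval s1 w))).
      assert (dd s2 a (gmul a (s1 y)) <= L).
      { rewrite <- (mul_one_r _ a) at 1. rewrite (dd_transl s2 sym2 gen2). apply HL. }
      lia. }
  intros a b. destruct (dd_geod_word s1 sym1 gen1 a b) as [w [Lw Ew]].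
  rewrite <- Lw, <- Ew. apply W.
Qed.

Section Ext.
Context {E G : Group} (iota : Z -> E) (pi : E -> G).
Hypothesis iota_add : forall m n : Z, iota (m + n)%Z = gmul (iota m) (iota n).
Hypothesis iota_inj : forall m n : Z, iota m = iota n -> m = n.
Hypothesis pi_hom : is_group_hom pi.
Hypothesis central : forall (n : Z) (e : E), gmul (iota n) e = gmul e (iota n).

Lemma iota_0 : iota 0%Z = gone.
Proof.
  apply (mul_cancel_l _ (iota 0%Z)). rewrite <- iota_add, mul_one_r. reflexivity.
Qed.

Lemma iota_opp n : ginv (iota n) = iota (- n)%Z.
Proof. symmetry. apply inv_unique. rewrite <- iota_add. replace (n + - n)%Z with 0%Z by lia. apply iota_0. Qed.

Lemma pi_one : pi gone = gone.
Proof.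
  apply (mul_cancel_l _ (pi gone)). rewrite <- pi_hom, gone_l, mul_one_r. reflexivity.
Qed.

Lemma pi_inv e : pi (ginv e) = ginv (pi e).
Proof.
  apply inv_unique. rewrite <- pi_hom, mul_inv_r. apply pi_one.
Qed.

Lemma pi_eval {X : Type} (ev : X -> E) w : pi (word_eval ev w) = word_eval (fun x => pi (ev x)) w.
Proof.
  induction w as [|x w IH]; simpl. apply pi_one. rewrite pi_hom, IH. reflexivity.
Qed.

Lemma fib_le_eq x y : fib_le iota x y -> exists n, (0 <= n)%Z /\ y = gmul (iota n) x.
Proof.
  intros [n [nn En]]. exists n. split; auto. apply solve_r in En. rewrite inv_inv in En. exact En.
Qed.

Lemma key_eq n0 n1 n2 a1 a2 r x :
  x = gmul (iota n0) (gmul (gmul (iota n1) a1) (gmul (iota n2) a2)) ->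
  gmul a1 a2 = gmul x (iota r) -> (n0 + n1 + n2 + r = 0)%Z.
Proof.
  intros E1 E2.
  assert (gmul (gmul (iota n1) a1) (gmul (iota n2) a2) = gmul (iota (n1 + n2)) (gmul a1 a2)) as E3.
  { rewrite <- (gassoc _ (iota n1) a1), (gassoc _ a1 (iota n2) a2), <- (central n2 a1),
      <- (gassoc _ (iota n2) a1 a2), (gassoc _ (iota n1) (iota n2)), <- iota_add. reflexivity. }
  rewrite E3, E2, gassoc, <- iota_add, gassoc, (central _ x), <- gassoc, <- iota_add in E1.
  apply iota_inj. rewrite iota_0. apply (mul_cancel_l _ x). rewrite mul_one_r.
  rewrite E1 at 2. f_equal. f_equal. lia.
Qed.

Variable C : Z.
Context {X : Type} (ev : X -> E).

Lemma wval_app u v : wval ev iota C (u ++ v) = gmul (wval ev iota C u) (wval ev iota C v).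
Proof.
  unfold wval. rewrite word_eval_app, length_app.
  replace (- C * Z.of_nat (length u + length v))%Z with
    (- C * Z.of_nat (length u) + - C * Z.of_nat (length v))%Z by lia.
  rewrite iota_add. rewrite <- !gassoc. f_equal. rewrite !gassoc. f_equal. symmetry; apply central.
Qed.

Lemma wval_ins u v w : word_eval ev v = gone ->
  wval ev iota C (u ++ v ++ w) = gmul (wval ev iota C (u ++ w)) (iota (- C * Z.of_nat (length v))%Z).
Proof.
  intro Ev. unfold wval. rewrite !word_eval_app, Ev, gone_l, !length_app.
  rewrite <- (gassoc E (gmul (word_eval ev u) (word_eval ev w))), <- iota_add. f_equal. f_equal. lia.
Qed.

Lemma rep_word z t : word_eval ev z = iota (-1)%Z ->
  word_eval ev (concat (repeat z t)) = iota (- Z.of_nat t)%Z /\ length (concat (repeat z t)) = t * length z.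
Proof.
  intro Ez. induction t as [|t [IH1 IH2]]; simpl.
  - split; auto. symmetry. apply iota_0.
  - rewrite word_eval_app, length_app, IH1, IH2, Ez, <- iota_add. split. f_equal. lia. lia.
Qed.

End Ext.

End PG.
Import PG.

Theorem lemma3p2 (E G : Group) (iota : Z -> E) (pi : E -> G)
  (X : Type) (ev : X -> E) (C : Z) (rho : G -> E) :
  word_hyperbolic G ->
  central_extension E G iota pi ->
  fin_sym_gen ev ->
  (0 < C)%Z ->
  (forall g : G, is_fib_max ev iota pi C g (rho g)) ->
  (exists lam : R, (0 < lam)%R /\
     forall (g : G) (w : list X),
       pi (word_eval ev w) = g -> wval ev iota C w = rho g ->
       quasigeodesic (fun x => pi (ev x)) lam w) ->
  forall k : nat, exists K : nat, forall g h : G,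
    (exists p : list X,
       geodesic_word (fun x => pi (ev x)) gone (gmul g h) p /\
       near_path (fun x => pi (ev x)) k g gone p) ->
    dist_le ev (rho (gmul g h)) (gmul (rho g) (rho h)) K.
Proof.
  intros Hhyp Hce Hfin HC Hmax Hlam k.
  destruct Hhyp as [Y [sY [delta [[FinY [symY genY]] Hd]]]].
  destruct Hce as [iota_add [iota_inj [pi_hom [pi_surj [ker central]]]]].
  destruct Hfin as [FinX [symX genX]].
  destruct Hlam as [lam [lam_pos Hq]].
  set (sX := fun x => pi (ev x)) in *.
  assert (symX' : forall x, exists x', sX x' = ginv (sX x)).
  { intro x. destruct (symX x) as [x' Ex]. exists x'. unfold sX. rewrite Ex. apply pi_inv; auto. }
  assert (PE : forall w, pi (word_eval ev w) = word_eval sX w).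
  { intro w. unfold sX. apply (pi_eval pi pi_hom ev w). }
  assert (genX' : forall a : G, exists w, word_eval sX w = a).
  { intro a. destruct (pi_surj a) as [e Ee]. destruct (genX e) as [w Ew]. exists w.
    rewrite <- PE. congruence. }
  assert (HLam : exists Lam : nat, (lam <= INR Lam)%R).
  { destruct (archimed lam) as [A1 _]. exists (Z.to_nat (up lam)).
    rewrite INR_IZR_INZ. rewrite Z2Nat.id. lra.
    apply le_IZR. simpl. lra. }
  destruct HLam as [Lam HLam].
  destruct (compare_gen sX sY symX' genX' symY genY FinX) as [L1 [L1p HL1]].
  destruct (compare_gen sY sX symY genY symX' genX' FinY) as [L2 [L2p HL2]].
  set (M := (Lam + 1) * L2).
  destruct (morse1 sY symY genY delta Hd L1 M L1p) as [D1 HD1].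
  destruct (morse2 sY symY genY delta Hd L1 M L1p) as [D2 HD2].
  destruct (genX (iota (-1)%Z)) as [z1 Ez1].
  set (R' := L2 * (L1 * k + D2 + D1)).
  exists (Z.to_nat C * (2 * R') * length z1).
  intros g h [p [Gp Np]].
  assert (LC : forall w, Lchain sY L1 (vertex sX gone w) (length w)).
  { intros w i lt. eapply Nat.le_trans. apply HL1.
    pose proof (vertex_dd sX symX' genX' gone w i (S i) ltac:(lia)). nia. }
  assert (V0 : forall w, vertex sX gone w 0 = gone) by (intro w; apply (vertex_0 sX symX' genX')).
  assert (VN : forall w, vertex sX gone w (length w) = word_eval sX w)
    by (intro w; rewrite (vertex_len sX symX' genX'); apply gone_l).
  destruct (Hmax (gmul g h)) as [[u [Pu Wu]] _].
  pose proof (Hq _ u Pu Wu) as Qu.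
  assert (Tu : forall i j, i <= j -> j <= length u ->
            j - i <= M * dd sY (vertex sX gone u i) (vertex sX gone u j)).
  { intros i j lij lj.
    destruct (Qu i j (dd sX (vertex sX gone u i) (vertex sX gone u j)) ltac:(lia) lj
                (dd_spec sX symX' genX' _ _)) as [Q1 _].
    rewrite Nat.max_r, Nat.min_l in Q1 by lia.
    assert (INR (j - i) <= INR (Lam * dd sX (vertex sX gone u i) (vertex sX gone u j)))%R as Q2.
    { rewrite mult_INR. eapply Rle_trans. exact Q1. apply Rmult_le_compat_r. apply pos_INR. exact HLam. }
    apply INR_le in Q2. pose proof (HL2 (vertex sX gone u i) (vertex sX gone u j)). unfold M. nia. }
  pose proof (geod_word_chain sX symX' genX' gone (gmul g h) p Gp) as Gpc.
  assert (Tp : forall i j, i <= j -> j <= length p ->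
            j - i <= M * dd sY (vertex sX gone p i) (vertex sX gone p j)).
  { intros i j lij lj. pose proof (Gpc i j ltac:(lia) lj). unfold ad in H.
    pose proof (HL2 (vertex sX gone p i) (vertex sX gone p j)). unfold M. nia. }
  destruct (geodc_exists sY symY genY gone (gmul g h)) as [ga [Gga [Ega0 Egan]]].
  assert (EpN : vertex sX gone p (length p) = gmul g h).
  { rewrite (vertex_len sX symX' genX'). apply Gp. }
  assert (EuN : vertex sX gone u (length u) = gmul g h).
  { rewrite VN, <- PE. exact Pu. }
  destruct Np as [i [li Di]].
  apply (dd_le sX symX' genX') in Di.
  destruct (HD2 (vertex sX gone p) (length p) ga _ (LC p) Tp Gga ltac:(rewrite V0; auto)
              ltac:(rewrite EpN; auto) i li) as [i2 [li2 Di2]].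
  destruct (HD1 (vertex sX gone u) (length u) ga _ (LC u) Tu Gga ltac:(rewrite V0; auto)
              ltac:(rewrite EuN; auto) i2 li2) as [m [lm Dm]].
  assert (DY : dd sY g (vertex sX gone u m) <= L1 * k + D2 + D1).
  { pose proof (dd_tri sY symY genY g (vertex sX gone p i) (ga i2)).
    pose proof (dd_tri sY symY genY g (ga i2) (vertex sX gone u m)).
    pose proof (HL1 g (vertex sX gone p i)). nia. }
  assert (DX : dd sX g (vertex sX gone u m) <= R').
  { pose proof (HL2 g (vertex sX gone u m)). unfold R'. nia. }
  destruct (dd_geod_word sX symX' genX' g (vertex sX gone u m)) as [sw [Lsw Esw]].
  destruct (inv_word ev symX genX sw) as [sg [Lsg Esg]].
  set (A := firstn m u) in *. set (B := skipn m u).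
  assert (HAB : A ++ B = u) by apply firstn_skipn.
  assert (VA : vertex sX gone u m = pi (word_eval ev A)).
  { unfold vertex. rewrite gone_l, PE. reflexivity. }
  assert (PA : pi (word_eval ev (A ++ sg)) = g).
  { rewrite word_eval_app, pi_hom, <- VA, <- Esw, Esg, (pi_inv pi pi_hom), PE.
    rewrite <- gassoc, mul_inv_r, mul_one_r. reflexivity. }
  assert (PB : pi (word_eval ev (sw ++ B)) = h).
  { rewrite word_eval_app, pi_hom, PE.
    rewrite <- HAB, word_eval_app, pi_hom, <- VA, <- Esw in Pu.
    rewrite <- gassoc in Pu. apply mul_cancel_l in Pu. exact Pu. }
  destruct (Hmax g) as [[wg [Pg Wg]] Fg].
  destruct (Hmax h) as [[wh [Ph Wh]] Fh].
  destruct (Hmax (gmul g h)) as [_ Fgh].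
  destruct (fib_le_eq iota _ _ (Fg _ PA)) as [n1 [n1p E1]].
  destruct (fib_le_eq iota _ _ (Fh _ PB)) as [n2 [n2p E2]].
  assert (Pgh : pi (word_eval ev (wg ++ wh)) = gmul g h) by (rewrite word_eval_app, pi_hom, Pg, Ph; reflexivity).
  destruct (fib_le_eq iota _ _ (Fgh _ Pgh)) as [n0 [n0p E0]].
  rewrite (wval_app iota iota_add central) in E0. rewrite Wg, Wh in E0.
  pose proof E0 as E0'.
  assert (Ekey : gmul (wval ev iota C (A ++ sg)) (wval ev iota C (sw ++ B)) =
                 gmul (rho (gmul g h)) (iota (- C * Z.of_nat (length (sg ++ sw)))%Z)).
  { rewrite <- (wval_app iota iota_add central), <- app_assoc, (app_assoc sg sw B).
    rewrite (wval_ins iota iota_add C ev A (sg ++ sw) B).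
    - rewrite HAB, Wu. reflexivity.
    - rewrite word_eval_app, Esg. apply ginv_l. }
  rewrite E1, E2 in E0.
  pose proof (key_eq iota iota_add iota_inj central _ _ _ _ _ _ _ E0 Ekey) as KE.
  rewrite length_app, Lsg in KE.
  assert (KE2 : (n0 <= C * Z.of_nat (2 * length sw))%Z) by nia.
  assert (KE3 : Z.to_nat n0 <= Z.to_nat C * (2 * length sw)) by nia.
  assert (KE4 : Z.to_nat C * (2 * length sw) <= Z.to_nat C * (2 * R')) by
    (apply Nat.mul_le_mono_l; lia).
  set (t := Z.to_nat n0).
  destruct (rep_word iota iota_add ev z1 t Ez1) as [Et Lt].
  exists (concat (repeat z1 t)). split.
  - rewrite Lt. apply Nat.mul_le_mono_r. unfold t. lia.
  - rewrite Et. unfold t. rewrite Z2Nat.id by lia.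
    rewrite E0'. set (P := gmul (rho g) (rho h)).
    rewrite <- gassoc, <- (central (- n0)%Z P), gassoc, <- iota_add.
    replace (n0 + - n0)%Z with 0%Z by lia. rewrite (iota_0 iota iota_add). apply gone_l.
Qed.
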